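(* Consider a matched pair study and assume Fisher's null $H_0$ holds. If $\Gamma^\star_{(k)}\le\Gamma_0$ for some $1\le k\le I$ and $\Gamma_0\in[1,\infty]$, then $\overline p_{\Gamma_0;k}:=\overline G_{\Gamma_0;k}(T)$, where $\overline G_{\Gamma_0;k}(c)=\mathbb P(\overline T(\Gamma_0;k)\ge c)$, satisfies $\mathbb P(\overline p_{\Gamma_0;k}\le\alpha)\le\alpha$ for all $\alpha\in(0,1)$.
   Context: Setting: $I$ matched pairs ($n_i=2$), potential outcomes fixed, $Z\in\mathcal Z=\{z\in\{0,1\}^{2I}:z_{i1}+z_{i2}=1\ \forall i\}$ is the only randomness, with true mechanism $\mathbb P(Z=z)=\prod_i\prod_j(p^\star_{ij})^{z_{ij}}$, $p^\star_{i1}+p^\star_{i2}=1$; true hidden bias $\Gamma^\star_i=\max_jp^\star_{ij}/\min_kp^\star_{ik}\in[1,\infty]$; $\Gamma^\star_{(k)}$ is the $k$th smallest. Fisher's null $H_0$: $Y_{ij}(1)=Y_{ij}(0)$ for all $i,j$. $T=\sum_i\sum_jZ_{ij}q_{ij}$ with $q_{ij}$ fixed functions of $Y(0)$. $\mathcal I_k$ is a set of indices of $k$ pairs with the smallest values of $|q_{i1}-q_{i2}|$. $\overline T(\Gamma_0;k)$ is a sum of independent variables: for $i\in\mathcal I_k$ it equals $\max\{q_{i1},q_{i2}\}$ with probability $\Gamma_0/(1+\Gamma_0)$ (probability 1 if $\Gamma_0=\infty$) and $\min\{q_{i1},q_{i2}\}$ otherwise; for $i\notin\mathcal I_k$ it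 equals $\max\{q_{i1},q_{i2}\}$ with probability 1. *)

(* Defs.v *)
From HB Require Import structures.
From mathcomp Require Import all_boot all_order all_algebra.
From mathcomp Require Import constructive_ereal.
Set Implicit Arguments. Unset Strict Implicit. Unset Printing Implicit Defensive.
Import Order.TTheory GRing.Theory Num.Theory.
Local Open Scope ring_scope.

(* Pairs are indexed by 'I_I, units within a pair by 'I_2 (ord0 = unit 1,
   ord_max = unit 2).  A treatment assignment z in
   Z = {z in {0,1}^{2I} : z_i1 + z_i2 = 1} is encoded by the function
   i |-> (the unique j with z_ij = 1), i.e. z : {ffun 'I_I -> 'I_2}. *)

Section Defs.
Variables (R : realFieldType) (I : nat).

(* P(Z = z) = prod_i prod_j p_ij^{z_ij} = prod_i p_{i, z i} *)
Definition probZ (p : 'I_I -> 'I_2 -> R) (z : {ffun 'I_I -> 'I_2}) : R :=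
  \prod_(i < I) p i (z i).

Definition probE (p : 'I_I -> 'I_2 -> R) (E : pred {ffun 'I_I -> 'I_2}) : R :=
  \sum_(z : {ffun 'I_I -> 'I_2} | E z) probZ p z.

(* T = sum_i sum_j Z_ij q_ij *)
Definition Tstat (q : 'I_I -> 'I_2 -> R) (z : {ffun 'I_I -> 'I_2}) : R :=
  \sum_(i < I) q i (z i).

Definition Gamma_star (p : 'I_I -> 'I_2 -> R) (i : 'I_I) : \bar R :=
  let mx := Num.max (p i ord0) (p i ord_max) in
  let mn := Num.min (p i ord0) (p i ord_max) in
  if mn == 0 then +oo%E else ((mx / mn)%:E)%E.

(* k-th smallest of Gamma*_1, ..., Gamma*_I  (k is 1-based) *)
Definition Gamma_star_ord (p : 'I_I -> 'I_2 -> R) (k : nat) : \bar R :=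
  nth (+oo)%E (sort <=%O [seq Gamma_star p i | i <- enum 'I_I]) k.-1.

Definition smallest_k_set (q : 'I_I -> 'I_2 -> R) (k : nat) (Ik : {set 'I_I}) : Prop :=
  #|Ik| = k /\
  forall i j, i \in Ik -> j \notin Ik ->
    `|q i ord0 - q i ord_max| <= `|q j ord0 - q j ord_max|.

(* probability that a unit of Ik takes the value max{q_i1,q_i2}:
   Gamma0/(1+Gamma0), or 1 if Gamma0 = +oo *)
Definition pi_max (Gamma0 : \bar R) : R :=
  match Gamma0 with
  | r%:E => r / (1 + r)
  | _ => 1
  end.

(* Tbar(Gamma0; k) = sum_i B_i with independent B_i; the realisation
   b : {ffun 'I_I -> bool} encodes B_i = max (b i = true) or min (b i = false). *)
Definition Tbar_weight (Gamma0 : \bar R) (Ik : {set 'I_I}) (b : {ffun 'I_I -> bool}) : R :=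
  \prod_(i < I)
    (if i \in Ik then (if b i then pi_max Gamma0 else 1 - pi_max Gamma0)
     else (if b i then 1 else 0)).

Definition Tbar_value (q : 'I_I -> 'I_2 -> R) (b : {ffun 'I_I -> bool}) : R :=
  \sum_(i < I) (if b i then Num.max (q i ord0) (q i ord_max)
                else Num.min (q i ord0) (q i ord_max)).

Definition Gbar (q : 'I_I -> 'I_2 -> R) (Gamma0 : \bar R) (Ik : {set 'I_I}) (c : R) : R :=
  \sum_(b : {ffun 'I_I -> bool} | c <= Tbar_value q b) Tbar_weight Gamma0 Ik b.

End Defs.

(* Main.v *)
Require Import Defs.
From HB Require Import structures.
From mathcomp Require Import all_boot all_order all_algebra.
From mathcomp Require Import constructive_ereal ring lra zify.
Import Order.TTheory GRing.Theory Num.Theory.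
Local Open Scope ring_scope.
Set Implicit Arguments. Unset Strict Implicit.

Section Gen.
Variables (R : realFieldType) (I : nat).
Implicit Types (a : 'I_I -> R) (b : {ffun 'I_I -> bool}) (g : {ffun 'I_I -> bool} -> R).

Definition mu a b : R := \prod_(i < I) (if b i then a i else 1 - a i).
Definition Ex a g : R := \sum_b mu a b * g b.
Definition flip (i0 : 'I_I) b : {ffun 'I_I -> bool} :=
  [ffun i => if i == i0 then ~~ b i else b i].

Lemma flipK i0 : involutive (flip i0).
Proof.
move=> b; apply/ffunP => i; rewrite !ffunE.
by case: (i == i0) => //=; rewrite negbK.
Qed.

Lemma mu_ext a a' b : (forall i, a i = a' i) -> mu a b = mu a' b.
Proof. by move=> h; apply: eq_bigr => i _; rewrite h. Qed.

Lemma Ex_ext a a' g : (forall i, a i = a' i) -> Ex a g = Ex a' g.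
Proof. by move=> h; apply: eq_bigr => b _; rewrite (mu_ext b h). Qed.

Lemma mu_ge0 a b : (forall i, 0 <= a i <= 1) -> 0 <= mu a b.
Proof.
move=> h; apply: prodr_ge0 => i _; have /andP[h0 h1] := h i.
by case: (b i) => //; rewrite subr_ge0.
Qed.

Lemma M1 a a' g (i0 : 'I_I) :
  (forall i, 0 <= a i <= 1) ->
  (forall i, i != i0 -> a i = a' i) -> a i0 <= a' i0 ->
  (forall b, b i0 -> g (flip i0 b) <= g b) ->
  Ex a g <= Ex a' g.
Proof.
move=> h01 heq hle hmon.
pose f b := \prod_(i < I | i != i0) (if b i then a i else 1 - a i).
have f0 : forall b, 0 <= f b.
  move=> b; apply: prodr_ge0 => i _; have /andP[h0 h1] := h01 i.
  by case: (b i) => //; rewrite subr_ge0.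
have ff : forall b, f (flip i0 b) = f b.
  move=> b; apply: eq_bigr => i hi; by rewrite ffunE (negbTE hi).
have dec : forall c, (forall i, i != i0 -> c i = a i) -> forall b,
    mu c b = (if b i0 then c i0 else 1 - c i0) * f b.
  move=> c hc b; rewrite /mu (bigD1 i0) //=; congr (_ * _).
  by apply: eq_bigr => i hi; rewrite hc.
have key : forall c, (forall i, i != i0 -> c i = a i) ->
   Ex c g = \sum_(b : {ffun 'I_I -> bool} | b i0) f b * (c i0 * g b + (1 - c i0) * g (flip i0 b)).
  move=> c hc; rewrite /Ex (bigID (fun b => b i0)) /=.
  rewrite [X in _ + X](reindex (flip i0)) /=; last first.
    by exists (flip i0) => b _; rewrite flipK.
  rewrite [X in _ + X](eq_bigl (fun b : {ffun 'I_I -> bool} => b i0)); last first.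
    by move=> b; rewrite ffunE eqxx negbK.
  rewrite -big_split /=; apply: eq_bigr => b.
  move=> hb; rewrite !dec // ffunE eqxx hb /= ff.
  ring.
rewrite (key a) // (key a'); last by move=> i /heq ->.
apply: ler_sum => b hb; apply: ler_wpM2l => //.
have := hmon b hb; set u := g b; set v := g (flip i0 b) => huv.
have : 0 <= (a' i0 - a i0) * (u - v) by apply: mulr_ge0; rewrite subr_ge0.
by rewrite -subr_ge0; congr (0 <= _); ring.
Qed.

Lemma Mall a a' g :
  (forall i, 0 <= a i <= 1) -> (forall i, 0 <= a' i <= 1) ->
  (forall i, a i <= a' i) ->
  (forall i0 b, b i0 -> g (flip i0 b) <= g b) ->
  Ex a g <= Ex a' g.
Proof.
move=> ha ha' hle hmon.
pose at_ t i := if (nat_of_ord i < t)%N then a' i else a i.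
have h01 : forall t i, 0 <= at_ t i <= 1 by move=> t i; rewrite /at_; case: ifP.
have step : forall t, Ex (at_ t) g <= Ex (at_ t.+1) g.
  move=> t; case: (ltnP t I) => ht.
    apply: (M1 (i0 := Ordinal ht)) => //.
    - move=> i hi; rewrite /at_ ltnS (leq_eqVlt i t).
      have hit : (nat_of_ord i == t) = false.
        by apply/negbTE; apply: contra hi => /eqP e; apply/eqP/val_inj.
      by rewrite hit.
    - by rewrite /at_ /= ltnn ltnSn.
    - by move=> b; apply: hmon.
  rewrite (@Ex_ext (at_ t) (at_ t.+1) g) // => i; rewrite /at_.
  by rewrite (leq_trans (ltn_ord i) ht) (leq_trans (ltn_ord i) (leqW ht)).
have chain : forall t, Ex a g <= Ex (at_ t) g.
  elim=> [|t IH].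
    by rewrite (@Ex_ext (a) (at_ 0) g) // => i; rewrite /at_.
  exact: le_trans IH (step t).
apply: le_trans (chain I) _; rewrite (@Ex_ext (at_ I) (a') g) //.
by move=> i; rewrite /at_ ltn_ord.
Qed.

Definition tau (i j x : 'I_I) : 'I_I := if x == i then j else if x == j then i else x.
Lemma tauK i j : involutive (tau i j).
Proof.
move=> x; rewrite /tau.
case: (eqVneq x i) => [->|hxi]; first by rewrite eqxx; case: (eqVneq j i) => [->|]; rewrite ?eqxx.
case: (eqVneq x j) => [->|hxj]; first by rewrite eqxx.
by rewrite (negbTE hxi) (negbTE hxj).
Qed.
Definition sw (i j : 'I_I) b : {ffun 'I_I -> bool} := [ffun x => b (tau i j x)].
Lemma swK i j : involutive (sw i j).
Proof. by move=> b; apply/ffunP => x; rewrite !ffunE tauK. Qed.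

Lemma Swap a' g (i j : 'I_I) :
  (forall x, 0 <= a' x <= 1) -> a' i = 1 ->
  (forall b, b i -> g (sw i j b) <= g b) ->
  Ex (fun x => a' (tau i j x)) g <= Ex a' g.
Proof.
move=> h01 hi hmon.
have emu : forall b, mu (fun x => a' (tau i j x)) b = mu a' (sw i j b).
  move=> b; rewrite /mu (reindex_inj (h := tau i j)) /=; last exact: can_inj (tauK i j).
  by apply: eq_bigr => x _; rewrite ffunE tauK.
rewrite /Ex; under eq_bigr => b _ do rewrite emu.
rewrite (reindex (sw i j)) /=; last by exists (sw i j) => b _; rewrite swK.
apply: ler_sum => b _; rewrite swK.
case hb: (b i).
  by apply: ler_wpM2l; [exact: mu_ge0 | exact: hmon].
have -> : mu a' b = 0.
  by rewrite /mu (bigD1 i) //= hb hi subrr mul0r.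
by rewrite !mul0r.
Qed.
End Gen.

Section Spec.
Variables (R : realFieldType) (I : nat) (q : 'I_I -> 'I_2 -> R).

Implicit Types (b : {ffun 'I_I -> bool}).
Definition hi i := Num.max (q i ord0) (q i ord_max).
Definition lo i := Num.min (q i ord0) (q i ord_max).

Lemma mm (x y : R) : Num.max x y - Num.min x y = `|x - y| /\ Num.min x y <= Num.max x y.
Proof.
case: (leP x y) => h.
  rewrite ler0_norm ?subr_le0 //; split; [ring|done].
rewrite gtr0_norm ?subr_gt0 //; split; [ring| exact: ltW].
Qed.

Lemma V_flip (i0 : 'I_I) b : b i0 -> Tbar_value q (flip i0 b) <= Tbar_value q b.
Proof.
move=> hb; rewrite /Tbar_value (bigD1 i0) // [X in _ <= X](bigD1 i0) //= ffunE eqxx hb /=.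
apply: lerD; first by case: (mm (q i0 ord0) (q i0 ord_max)).
by rewrite le_eqVlt; apply/orP; left; apply/eqP; apply: eq_bigr => i hi; rewrite ffunE (negbTE hi).
Qed.

Lemma V_sw (i j : 'I_I) b : hi j - lo j <= hi i - lo i -> b i ->
  Tbar_value q (sw i j b) <= Tbar_value q b.
Proof.
move=> hd hb.
case: (eqVneq i j) => [<-|hij].
  rewrite le_eqVlt; apply/orP; left; apply/eqP; apply: eq_bigr => x _.
  by rewrite ffunE /tau; case: (eqVneq x i) => [->|].
have hji : (j == i) = false by rewrite eq_sym (negbTE hij).
have hji' : j != i by rewrite hji.
rewrite /Tbar_value (bigD1 i) // [X in _ <= X](bigD1 i) //=.
rewrite (bigD1 j) //= [X in _ <= _ + X](bigD1 j) //=.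
rewrite !ffunE /tau eqxx hji eqxx hb.
rewrite [X in _ <= _ + (_ + X)](eq_bigr (fun x => if sw i j b x then hi x else lo x)); last first.
  move=> x /andP[hxi hxj]; by rewrite ffunE /tau (negbTE hxi) (negbTE hxj).
rewrite -/(hi i) -/(hi j) -/(lo i) -/(lo j).
move: hd; case: (b j) => hd; lra.
Qed.

Definition gc (c : R) b : R := if c <= Tbar_value q b then 1 else 0.

Lemma gc_flip c (i0 : 'I_I) b : b i0 -> gc c (flip i0 b) <= gc c b.
Proof.
move=> hb; rewrite /gc; have h := V_flip hb.
case: ifP => h1; last by case: ifP.
by rewrite (le_trans h1 h).
Qed.

Lemma gc_sw c (i j : 'I_I) b : hi j - lo j <= hi i - lo i -> b i ->
  gc c (sw i j b) <= gc c b.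
Proof.
move=> hd hb; rewrite /gc; have h := V_sw hd hb.
case: ifP => h1; last by case: ifP.
by rewrite (le_trans h1 h).
Qed.

Definition piA (pm : R) (X : {set 'I_I}) (i : 'I_I) : R := if i \in X then pm else 1.

Lemma Gbar_Ex G X c : Gbar q G X c = Ex (piA (pi_max G) X) (gc c).
Proof.
rewrite /Gbar /Ex big_mkcond; apply: eq_bigr => b _.
have -> : Tbar_weight G X b = mu (piA (pi_max G) X) b.
  apply: eq_bigr => i _; rewrite /piA; case: (i \in X) => //.
  by case: (b i); rewrite ?subrr.
by rewrite /gc; case: ifP; rewrite ?mulr1 ?mulr0.
Qed.

Lemma I2cases (x : 'I_2) : x = ord0 \/ x = ord_max.
Proof.
case: x => [[|[|n]] hn].
- by left; apply: val_inj.
- by right; apply: val_inj.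
- by [].
Qed.

Definition oth (x : 'I_2) : 'I_2 := if x == ord0 then ord_max else ord0.
Lemma oth_neq x : (oth x == x) = false.
Proof. by case: (I2cases x) => ->. Qed.
Lemma oth_cases x y : y = x \/ y = oth x.
Proof. by case: (I2cases x) => ->; case: (I2cases y) => ->; auto. Qed.

Definition jm (i : 'I_I) : 'I_2 := if q i ord0 <= q i ord_max then ord_max else ord0.
Lemma q_jm i : q i (jm i) = hi i /\ q i (oth (jm i)) = lo i.
Proof.
rewrite /jm /hi /lo /oth; case: (leP (q i ord0) (q i ord_max)) => h //=.
Qed.

Lemma probE_Ex (p : 'I_I -> 'I_2 -> R) (P : R -> bool) :
  (forall i, p i ord0 + p i ord_max = 1) ->
  probE p (fun z => P (Tstat q z)) =
  \sum_(b | P (Tbar_value q b)) mu (fun i => p i (jm i)) b.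
Proof.
move=> hp.
have poth : forall i x, p i (oth x) = 1 - p i x.
  move=> i x; have := hp i; case: (I2cases x) => -> /= h; rewrite -h; ring.
pose dec b : {ffun 'I_I -> 'I_2} := [ffun i => if b i then jm i else oth (jm i)].
pose enc (z : {ffun 'I_I -> 'I_2}) : {ffun 'I_I -> bool} := [ffun i => z i == jm i].
rewrite /probE (reindex dec) /=; last first.
  exists enc => z _; apply/ffunP => i; rewrite !ffunE.
    by case: ifP; rewrite ?eqxx // oth_neq.
  by case: (eqVneq (z i) (jm i)) => [->//|h]; case: (oth_cases (jm i) (z i)) => // e; rewrite e in h *; rewrite eqxx in h.
apply: eq_big => b.
  congr P; apply: eq_bigr => i _; rewrite ffunE; case: (q_jm i) => h1 h2; by case: (b i).
move=> _; apply: eq_bigr => i _; rewrite ffunE; case: (b i) => //; by rewrite poth.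
Qed.

Lemma B3 (pm : R) (Ik : {set 'I_I}) c :
  0 <= pm <= 1 ->
  (forall i j, i \in Ik -> j \notin Ik -> hi i - lo i <= hi j - lo j) ->
  forall A : {set 'I_I}, #|A| = #|Ik| ->
  Ex (piA pm A) (gc c) <= Ex (piA pm Ik) (gc c).
Proof.
move=> hpm hsm A hA.
move: {2}#|A :\: Ik| (leqnn #|A :\: Ik|) => n.
elim: n A hA => [|n IH] A hA hn.
  have hs : A \subset Ik.
    by rewrite -setD_eq0 -cards_eq0 -leqn0.
  have -> : A = Ik by apply/eqP; rewrite eqEcard hs hA leqnn.
  exact: lexx.
case: (leqP #|A :\: Ik| n) => hn'; first exact: IH.
have hc : #|A :\: Ik| = n.+1 by apply/eqP; rewrite eqn_leq hn hn'.
have : (0 < #|A :\: Ik|)%N by rewrite hc.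
rewrite card_gt0 => /set0Pn[i hi].
have hc2 : #|Ik :\: A| = #|A :\: Ik|.
  have e1 := cardsID Ik A; have e2 := cardsID A Ik.
  rewrite setIC in e2; move: e1 e2; rewrite hA; lia.
have : (0 < #|Ik :\: A|)%N by rewrite hc2 hc.
rewrite card_gt0 => /set0Pn[j hj].
move: hi hj; rewrite !inE => /andP[hiIk hiA] /andP[hjA hjIk].
have hij : i != j by apply: contraNneq hjA => <-.
pose A' := j |: (A :\ i).
have hA' : #|A'| = #|Ik|.
  rewrite cardsU1 !inE (negbTE hjA) andbF /= -hA (cardsD1 i A) hiA.
  by rewrite add1n.
have hn2 : (#|A' :\: Ik| <= n)%N.
  have hsub : A' :\: Ik \subset (A :\: Ik) :\ i.
    apply/subsetP => x; rewrite !inE => /andP[hx /orP[/eqP e|/andP[h1 h2]]].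
      by rewrite e hjIk in hx.
    by rewrite h1 hx h2.
  have := subset_leq_card hsub.
  have := cardsD1 i (A :\: Ik); rewrite !inE hiIk hiA /= hc; lia.
apply: le_trans (IH A' hA' hn2).
rewrite (@Ex_ext _ _ (piA pm A) (fun x => piA pm A' (tau i j x))); last first.
  move=> x; rewrite /piA /tau /A'.
  case: (eqVneq x i) => [->|hxi].
    by rewrite hiA !inE eqxx.
  case: (eqVneq x j) => [->|hxj].
    by rewrite (negbTE hjA) !inE (negbTE hij) eqxx.
  by rewrite !inE (negbTE hxi) (negbTE hxj).
apply: Swap.
- by move=> x; rewrite /piA; case: ifP => _ //; rewrite ler01 lexx.
- by rewrite /piA !inE (negbTE hij) eqxx.
- move=> b hb; apply: gc_sw => //; by apply: hsm => //; rewrite hiIk.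
Qed.
End Spec.

Section Card.
Variables (R : realFieldType) (I : nat) (p : 'I_I -> 'I_2 -> R).

Lemma exA (G : \bar R) k : (1 <= k <= I)%N -> (Gamma_star_ord p k <= G)%E ->
  exists A : {set 'I_I}, #|A| = k /\ forall i, i \in A -> (Gamma_star p i <= G)%E.
Proof.
move=> /andP[k1 kI] hG.
set l := [seq Gamma_star p i | i <- enum 'I_I].
set s := sort <=%O l.
have ss : sorted <=%O s by apply: sort_sorted; exact: le_total.
have sz : size s = I by rewrite size_sort size_map size_enum_ord.
pose P := fun x : \bar R => (x <= G)%E.
have hall : all P (take k s).
  apply/allP => x /(nthP +oo%E) [m hm <-].
  have hmk : (m < k)%N by move: hm; rewrite size_take sz; case: (ltnP k I) => ? ?; lia.
  rewrite nth_take // /P; apply: le_trans hG.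
  rewrite /Gamma_star_ord -/l -/s.
  apply: (le_sorted_leq_nth +oo%E ss); rewrite ?inE ?sz; lia.
have hcnt : (k <= count P s)%N.
  rewrite -(cat_take_drop k s) count_cat.
  move: hall; rewrite all_count => /eqP ->; rewrite size_take sz.
  case: (ltnP k I) => h; lia.
have hp : perm_eq s l by rewrite /s perm_sort.
rewrite (permP hp) /l count_map in hcnt.
pose s0 := [seq i <- enum 'I_I | P (Gamma_star p i)].
have hs0 : size s0 = count (preim (Gamma_star p) P) (enum 'I_I) by rewrite size_filter.
exists [set x in take k s0]; split.
  have hu : uniq (take k s0) by rewrite take_uniq // filter_uniq // enum_uniq.
  rewrite cardsE (card_uniqP hu).
  rewrite size_take hs0; case: (ltnP k (count (preim (Gamma_star p) P) (enum 'I_I))) => h //; apply/eqP; rewrite eqn_leq h.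
  exact: hcnt.
move=> i; rewrite inE => /mem_take; rewrite mem_filter => /andP[] //.
Qed.
End Card.

Section PiMax.
Variables (R : realFieldType) (I : nat) (p : 'I_I -> 'I_2 -> R).

Lemma pm01 (G : \bar R) : (1 <= G)%E -> 0 <= pi_max G <= 1.
Proof.
case: G => [r| |] //=; last by rewrite ler01 lexx.
rewrite lee_fin => hr.
have h1 : 0 < 1 + r by lra.
rewrite divr_ge0 /=; try lra.
by rewrite ler_pdivrMr //; lra.
Qed.

Lemma ap (G : \bar R) i x : (forall j, 0 <= p i j) -> p i ord0 + p i ord_max = 1 ->
  (1 <= G)%E -> (Gamma_star p i <= G)%E -> p i x <= pi_max G.
Proof.
move=> h0 h1 hG hS.
have hx1 : p i x <= 1.
  have a0 := h0 ord0; have a1 := h0 ord_max.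
  by case: (I2cases x) => ->; lra.
have hxm : p i x <= Num.max (p i ord0) (p i ord_max).
  by case: (I2cases x) => ->; rewrite ?le_max lexx ?orbT.
move: hG hS; case: G => [r| |] //= hG; rewrite /Gamma_star.
case: eqP => // hmn; rewrite lee_fin => hS.
rewrite lee_fin in hG.
have a0 := h0 ord0; have a1 := h0 ord_max.
have hsum := addr_max_min (p i ord0) (p i ord_max); rewrite h1 in hsum.
have hmn0 : 0 < Num.min (p i ord0) (p i ord_max).
  rewrite lt_def; apply/andP; split; first by apply/eqP.
  by rewrite le_min a0 a1.
move: hS hxm hsum hmn hmn0.
set M := Num.max _ _; set m := Num.min _ _ => hS hxm hsum hmn hmn0.
rewrite ler_pdivrMr // in hS.
have h1r : 0 < 1 + r by lra.
rewrite ler_pdivlMr //.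
nra.
Qed.
End PiMax.

Theorem corollary2 (R : realFieldType) (I : nat)
  (p : 'I_I -> 'I_2 -> R)
  (Y0 Y1 : 'I_I -> 'I_2 -> R)
  (qf : ('I_I -> 'I_2 -> R) -> 'I_I -> 'I_2 -> R)
  (k : nat) (Gamma0 : \bar R) (Ik : {set 'I_I}) :
  (forall i j, 0 <= p i j) ->
  (forall i, p i ord0 + p i ord_max = 1) ->
  (* Fisher's sharp null H0 *)
  (forall i j, Y1 i j = Y0 i j) ->
  (1 <= k <= I)%N ->
  (1 <= Gamma0)%E ->
  (Gamma_star_ord p k <= Gamma0)%E ->
  smallest_k_set (qf Y0) k Ik ->
  forall alpha : R, 0 < alpha < 1 ->
    probE p (fun z => Gbar (qf Y0) Gamma0 Ik (Tstat (qf Y0) z) <= alpha) <= alpha.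
Proof.
move=> hp0 hp1 _ hk hG hGs [hcard hsm] alpha /andP[ha0 ha1].
set q := qf Y0 in hsm *.
set a := fun i => p i (jm q i).
have a01 : forall i, 0 <= a i <= 1.
  move=> i; rewrite /a hp0 /=; have := hp1 i; have := hp0 i ord0; have := hp0 i ord_max.
  by case: (I2cases (jm q i)) => ->; lra.
have pm := pm01 hG.
have dom : forall c, \sum_(b | c <= Tbar_value q b) mu a b <= Gbar q Gamma0 Ik c.
  move=> c.
  have -> : \sum_(b | c <= Tbar_value q b) mu a b = Ex a (gc q c).
    rewrite /Ex big_mkcond; apply: eq_bigr => b _.
    by rewrite /gc; case: ifP; rewrite ?mulr1 ?mulr0.
  rewrite Gbar_Ex.
  have [A [hA hAS]] := exA hk hGs.
  apply: (le_trans (y := Ex (piA (pi_max Gamma0) A) (gc q c))).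
    apply: Mall => //.
    - by move=> i; rewrite /piA; case: ifP => _ //; rewrite ler01 lexx.
    - move=> i; rewrite /piA; case: ifP => hi.
        by apply: ap => //; apply: hAS.
      by case/andP: (a01 i).
    - by move=> i0 b hb; apply: gc_flip.
  apply: B3 => //; last by rewrite hA hcard.
  move=> i j hi hj; have := hsm i j hi hj.
  by rewrite /hi /lo; case: (mm (q i ord0) (q i ord_max)) => -> _; case: (mm (q j ord0) (q j ord_max)) => -> _.
rewrite (@probE_Ex R I q p (fun t => Gbar q Gamma0 Ik t <= alpha) hp1).
case: (pickP (fun b : {ffun 'I_I -> bool} => Gbar q Gamma0 Ik (Tbar_value q b) <= alpha)) => [b0 hb0|hn]; last first.
  by rewrite big_pred0 // ltW.
case: (@arg_minP _ _ _ b0 (fun b => Gbar q Gamma0 Ik (Tbar_value q b) <= alpha) (Tbar_value q) hb0) => b1 hb1 hmin.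
have h2 := le_trans (dom (Tbar_value q b1)) hb1.
apply: le_trans h2.
rewrite [X in _ <= X]big_mkcond [X in X <= _]big_mkcond; apply: ler_sum => b _.
case: ifP => hE; first by rewrite hmin.
by case: ifP => _ //; apply: mu_ge0.
Qed.
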